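(* Let $A,B\in\mathrm{SL}_2\mathbb{Z}_{\ge0}$ be noncommuting, well oriented, with $\mathrm{tr}(A)<\mathrm{tr}(B)$ and $\mathrm{tr}(AB)=\mathrm{tr}(B^2)$. Fix a (possibly empty) word $w$ and an integer $s\ge0$. Then: (1) $[wab(ab^2)^sab^3]<[wab^2(ab^2)^sab^2]$; (2) $[wab^3(ab^2)^sab]<[wab^2(ab^2)^sab^2]$, provided $w$ is empty or begins with $a$.
   Context: Words are finite strings over $\{a,b\}$; $\phi$ is the monoid homomorphism with $\phi(a)=A,\phi(b)=B$, and $[w]=\mathrm{tr}(\phi(w))$. Fixed points are for the Möbius action on $\partial\mathcal{H}=\mathbb{P}^1\mathbb{R}$; $\alpha^\pm$ ($\beta^\pm$) are the attracting/repelling fixed points of $A$ ($B$), both equal to the unique fixed point if parabolic. With $\partial\mathcal{H}$ cyclically ordered and $[\alpha,\beta]$ the closed counterclockwise interval from $\alpha$ to $\beta$, let $I^+=\{\alpha^+\}$ if $\alpha^+=\beta^+$, and otherwise the one of $[\alpha^+,\beta^+],[\beta^+,\alpha^+]$ mapped into itself by both $A$ and $B$ (if it exists); define $I^-$ likewise with $A^{-1},B^{-1},\alpha^-,\beta^-$. The pair is coherently oriented if both exist, and well oriented if $A,B$ is coherently oriented but $A,B^{-1}$ is not. *)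

(* Defs.v *)
From HB Require Import structures.
From mathcomp Require Import all_boot all_order all_algebra.
From mathcomp Require Import Rstruct.
Set Implicit Arguments. Unset Strict Implicit. Unset Printing Implicit Defensive.
Import Order.TTheory GRing.Theory Num.Theory.
Local Open Scope ring_scope.

Inductive letter := La | Lb.

Definition phi (A B : 'M[int]_2) (w : seq letter) : 'M[int]_2 :=
  foldr (fun x M => (match x with La => A | Lb => B end) *m M) 1%:M w.

Definition trw (A B : 'M[int]_2) (w : seq letter) : int := \tr (phi A B w).

Definition SL2nonneg (A : 'M[int]_2) : Prop :=
  (forall i j, 0 <= A i j) /\ \det A = 1.

Section Proj.
Variable R : realFieldType.

(* The boundary P^1 R = R u {oo}; None is the point oo. *)
Definition P1 := option R.

Definition i0 : 'I_2 := ord0.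
Definition i1 : 'I_2 := ord_max.

Definition mob (M : 'M[R]_2) (z : P1) : P1 :=
  match z with
  | Some x => let d := M i1 i0 * x + M i1 i1 in
              if d == 0 then None else Some ((M i0 i0 * x + M i0 i1) / d)
  | None => if M i1 i0 == 0 then None else Some (M i0 i0 / M i1 i0)
  end.

Definition cls (v : 'cV[R]_2) : P1 :=
  if v i1 ord0 == 0 then None else Some (v i0 ord0 / v i1 ord0).

(* Attracting (resp. repelling) fixed point: the fixed point whose eigenline has
   eigenvalue of modulus >= 1 (resp. <= 1); for det 1 hyperbolic this is the
   eigenvalue of modulus > 1 (resp. < 1), i.e. |derivative| < 1 (resp. > 1);
   for parabolic both coincide with the unique fixed point. *)
Definition attr_fp (M : 'M[R]_2) (z : P1) : Prop :=
  exists (v : 'cV[R]_2) (l : R), v != 0 /\ M *m v = l *: v /\ 1 <= `|l| /\ cls v = z.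
Definition rep_fp (M : 'M[R]_2) (z : P1) : Prop :=
  exists (v : 'cV[R]_2) (l : R), v != 0 /\ M *m v = l *: v /\ `|l| <= 1 /\ cls v = z.

(* Closed counterclockwise interval [a,b] of P^1 R = boundary of the upper half
   plane (counterclockwise = increasing along R, then through oo). *)
Definition ccw (a b : P1) (z : P1) : bool :=
  match a, b with
  | Some x, Some y =>
      if x <= y then (if z is Some t then (x <= t) && (t <= y) else false)
      else (if z is Some t then (x <= t) || (t <= y) else true)
  | Some x, None => if z is Some t then x <= t else true
  | None, Some y => if z is Some t then t <= y else true
  | None, None => z == None
  end.

Definition maps_into (M : 'M[R]_2) (I : P1 -> bool) : Prop :=
  forall z, I z -> I (mob M z).

Definition I_exists (M N : 'M[R]_2) (a b : P1) : Prop :=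
  a = b \/
  (maps_into M (ccw a b) /\ maps_into N (ccw a b)) \/
  (maps_into M (ccw b a) /\ maps_into N (ccw b a)).

Definition coherently_oriented (A B : 'M[R]_2) : Prop :=
  forall ap am bp bm : P1,
    attr_fp A ap -> rep_fp A am -> attr_fp B bp -> rep_fp B bm ->
    I_exists A B ap bp /\ I_exists (invmx A) (invmx B) am bm.

Definition well_oriented (A B : 'M[R]_2) : Prop :=
  coherently_oriented A B /\ ~ coherently_oriented A (invmx B).

End Proj.

Definition toR (A : 'M[int]_2) : 'M[Rdefinitions.R]_2 := map_mx (fun x : int => x%:~R) A.

Fixpoint pw (s : nat) (u : seq letter) : seq letter :=
  match s with O => [::] | S s' => u ++ pw s' u end.

(* Main.v *)
Require Import Defs.
From HB Require Import structures.
From mathcomp Require Import all_boot all_order all_algebra.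
From mathcomp Require Import Rstruct.
From mathcomp Require Import zify ring lra.
Import Order.TTheory GRing.Theory Num.Theory.
Set Implicit Arguments. Unset Strict Implicit.
Local Open Scope ring_scope.

Lemma o1 : (ord_max : 'I_2) = 1. Proof. exact/val_inj. Qed.
Lemma o2 : widen_ord (leqnSn 1) (ord_max : 'I_1) = 0 :> 'I_2. Proof. exact/val_inj. Qed.
Lemma o3 : lift (0:'I_2) (0:'I_1) = 1. Proof. exact/val_inj. Qed.
Lemma o4 : lift (1:'I_2) (0:'I_1) = 0. Proof. exact/val_inj. Qed.

Lemma det2 (M : 'M[int]_2) : \det M = M 0 0 * M 1 1 - M 0 1 * M 1 0.
Proof.
rewrite (expand_det_row M 0) !big_ord_recr big_ord0 /= /cofactor !det_mx11 !mxE /=.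
rewrite ?o1 ?o2 ?o3 ?o4 /=. ring.
Qed.
Lemma mul2 (M N : 'M[int]_2) i j : (M *m N) i j = M i 0 * N 0 j + M i 1 * N 1 j.
Proof. rewrite !mxE !big_ord_recr big_ord0 /= ?o1 ?o2 add0r //. Qed.
Lemma tr2 (M : 'M[int]_2) : \tr M = M 0 0 + M 1 1.
Proof. rewrite /mxtrace !big_ord_recr big_ord0 /= ?o1 ?o2 add0r //. Qed.
Lemma ord2P (i : 'I_2) : i = 0 \/ i = 1.
Proof. case: i => [[|[|//]] Hi]; [left|right]; exact/val_inj. Qed.

Ltac mxring := apply/matrixP => i j; have [->|->] := ord2P i; have [->|->] := ord2P j;
  repeat rewrite ?mxE ?big_ord_recr ?big_ord0 /= ?o1 ?o2; ring.
Ltac trring := rewrite ?tr2; repeat rewrite ?mxE ?big_ord_recr ?big_ord0 /= ?o1 ?o2; ring.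

Section Ids.
Variables A B : 'M[int]_2.
Local Notation a := (\tr A).
Local Notation b := (\tr B).
Local Notation t := (\tr (A *m B)).
Local Notation dA := (\det A).
Local Notation dB := (\det B).

Lemma M1_id :
 A *m B *m B *m A *m B *m B - A *m B *m A *m B *m B *m B =
  (- (2 * dA * dB^+2))%:M + (a * dB^+2) *: A + (b * dA * dB) *: B
   + (dB * (t - a * b)) *: (A *m B).
Proof. rewrite !det2 !tr2. mxring. Qed.

Lemma M2_id :
 A *m B *m B *m A *m B *m B - A *m B *m B *m B *m A *m B =
  (dA*dB*b^+2 - 2*dA*dB^+2)%:M + (a*dB^+2 - b*t*dB) *: A + (-(b*dA*dB)) *: B
   + (t*dB) *: (A*m B).
Proof. rewrite !det2 !tr2. mxring. Qed.

Lemma M2A_id :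
 (A *m B *m B *m A *m B *m B - A *m B *m B *m B *m A *m B) *m A =
  (a*b^+2*dA*dB - b*t*dA*dB - a*dA*dB^+2)%:M
  + (t^+2*dB - a*b*t*dB + a^+2*dB^+2 - 2*dA*dB^+2) *: A
  + (t*dA*dB - a*b*dA*dB) *: B + (b*dA*dB) *: (A *m B).
Proof. rewrite !det2 !tr2. mxring. Qed.
End Ids.

Lemma phi_cat A B u v : phi A B (u ++ v) = phi A B u *m phi A B v.
Proof. elim: u => [|x u IH] /=; first by rewrite /phi /= mul1mx.
rewrite /phi /= -/(phi A B (u ++ v)) IH -/(phi A B u) mulmxA //. Qed.
Lemma phi_a A B u : phi A B (La :: u) = A *m phi A B u. Proof. by []. Qed.
Lemma phi_b A B u : phi A B (Lb :: u) = B *m phi A B u. Proof. by []. Qed.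
Lemma phi_nil A B : phi A B [::] = 1%:M. Proof. by []. Qed.

Lemma SL_mul M N : SL2nonneg M -> SL2nonneg N -> SL2nonneg (M *m N).
Proof. move=> [HM dM] [HN dN]; split; last by rewrite det_mulmx dM dN mulr1.
move=> i j; rewrite mul2; apply: addr_ge0; apply: mulr_ge0 => //. Qed.
Lemma SL_1 : SL2nonneg 1%:M.
Proof. split; last by rewrite det1. move=> i j; rewrite mxE; case: (i == j) => //. Qed.
Lemma SL_phi A B w : SL2nonneg A -> SL2nonneg B -> SL2nonneg (phi A B w).
Proof. move=> HA HB; elim: w => [|[] w IH]; [exact: SL_1| rewrite phi_a | rewrite phi_b];
  exact: SL_mul. Qed.
Lemma diag1 M : SL2nonneg M -> 1 <= M 0 0 /\ 1 <= M 1 1.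
Proof. move=> [H d]; move: d; rewrite det2 => d.
have:= H 0 0; have:= H 0 1; have:= H 1 0; have:= H 1 1. move=> *; split; nia. Qed.

Lemma ge0s (x y : int) : y <= x -> 0 <= x - y.
Proof. by rewrite subr_ge0. Qed.

Lemma pos4 (w00 w01 w10 w11 n00 n01 n10 n11 : int) : 1 <= w00 -> 0<=w01 -> 0<=w10 -> 0<=w11 ->
  0 < n00 -> 0<=n01 -> 0<=n10 -> 0<=n11 -> 0 < w00*n00 + w01*n10 + w10*n01 + w11*n11.
Proof.
move=> h1 h2 h3 h4 h5 h6 h7 h8.
have := mulr_ge0 (ge0s h1) (ltW h5); have := mulr_ge0 h2 h7;
have := mulr_ge0 h3 h6; have := mulr_ge0 h4 h8. nia.
Qed.

Lemma combo_pos (W A B C : 'M[int]_2) (c0 c1 c2 c3 : int) :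
  SL2nonneg W -> SL2nonneg A -> SL2nonneg B -> SL2nonneg C ->
  0 <= c1 -> 0 <= c2 -> 0 <= c3 -> 0 < c0 + c1 + c2 + c3 ->
  0 < \tr (W *m (c0%:M + c1 *: A + c2 *: B + c3 *: C)).
Proof.
move=> HW HA HB HC h1 h2 h3 hs.
set N := _ + _ *: C.
have [A0 A1] := diag1 HA; have [B0 B1] := diag1 HB; have [C0 C1] := diag1 HC.
have [W0 W1] := diag1 HW.
have En : forall i j, N i j = c0 *+ (i == j) + c1 * A i j + c2 * B i j + c3 * C i j.
  by move=> i j; rewrite !mxE.
have N00 : 0 < N 0 0.
  rewrite En /= mulr1n.
  have := mulr_ge0 h1 (ge0s A0); have := mulr_ge0 h2 (ge0s B0);
  have := mulr_ge0 h3 (ge0s C0). clear -h1 h2 h3 hs; nia.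
have N11 : 0 <= N 1 1.
  rewrite En /= mulr1n.
  have := mulr_ge0 h1 (ge0s A1); have := mulr_ge0 h2 (ge0s B1);
  have := mulr_ge0 h3 (ge0s C1). clear -h1 h2 h3 hs; nia.
have Noff : forall i j, i != j -> 0 <= N i j.
  move=> i j /negbTE ij; rewrite En ij mulr0n add0r.
  apply: addr_ge0; [apply: addr_ge0|]; apply: mulr_ge0 => //;
  [exact: HA.1|exact: HB.1|exact: HC.1].
have N01 := Noff 0 1 isT; have N10 := Noff 1 0 isT.
rewrite tr2 !mul2 addrA; apply: pos4 => //; exact: HW.1.
Qed.

Lemma CHtr (M : 'M[int]_2) : \tr (M *m M) = \tr M ^+ 2 - 2 * \det M.
Proof. rewrite det2; trring. Qed.
Lemma tr_ge2 (M : 'M[int]_2) : SL2nonneg M -> 2 <= \tr M.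
Proof. move=> /diag1 [h0 h1]; rewrite tr2; lia. Qed.

Lemma Vpow (A B : 'M[int]_2) s : SL2nonneg A -> SL2nonneg B ->
  exists f g : int, [/\ 0 <= g, g < f &
   phi A B (pw s [:: La; Lb; Lb]) *m (A *m B *m B) = f *: (A *m B *m B) - g%:M].
Proof.
move=> HA HB; set P := A *m B *m B.
have SP : SL2nonneg P by apply: SL_mul => //; apply: SL_mul.
have HP : phi A B [:: La; Lb; Lb] = P by rewrite !(phi_a, phi_b) phi_nil mulmx1 !mulmxA.
elim: s => [|s [f [g [Hg Hgf H]]]].
  exists 1, 0; split => //=. rewrite ?phi_nil mul1mx scale1r. mxring.
exists (f * \tr P - g), f; split.
- clear -Hg Hgf; lia.
- have := tr_ge2 SP; move: (\tr P) => tau ht.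
  have := mulr_ge0 (ge0s ht) (ltW (le_lt_trans Hg Hgf)).
  clear -Hg Hgf; nia.
- rewrite (_ : pw s.+1 [:: La; Lb; Lb] = [:: La; Lb; Lb] ++ pw s [:: La; Lb; Lb]) // phi_cat HP -mulmxA H.
  have dP : \det P = 1 by case: SP.
  have -> : P *m (f *: P - g%:M) = (f * \tr P - g) *: P - (f * \det P)%:M.
    rewrite det2 tr2. mxring.
  by rewrite dP mulr1.
Qed.

Lemma ar (a0 b0 : int) : 2 <= a0 -> a0 < b0 ->
 [/\ 0 <= (b0 * b0 - 2) * (b0 * b0 - 2) - a0 * b0 * (b0 * b0 - 2) + a0 * a0 - 2,
     0 <= b0 * b0 - 2 - a0 * b0, 0 <= b0 &
  0 < a0 * (b0 * b0) - b0 * (b0 * b0 - 2) - a0 +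
 ((b0 * b0 - 2) * (b0 * b0 - 2) - a0 * b0 * (b0 * b0 - 2) + a0 * a0 - 2) +
 (b0 * b0 - 2 - a0 * b0) + b0].
Proof.
move=> ha Htr.
have h0 : 0 <= (b0 - a0 - 1) * b0 by apply: mulr_ge0; lia.
have al : 1 <= b0 * b0 - 2 - a0 * b0 by nia.
have t0 : 0 <= b0 * b0 - 2 by nia.
have t1 : 0 <= b0 * b0 - 2 - b0 + 1 by nia.
have := mulr_ge0 t0 (le_trans ler01 al).
have := mulr_ge0 t1 (le_trans ler01 al).
have a1 : 0 <= a0 - 2 by lia.
have a2 : 0 <= a0 + 1 by lia.
have := mulr_ge0 a1 a2.
move=> *; split; nia.
Qed.

Unset Implicit Arguments.
Theorem lemma6p1 (A B : 'M[int]_2) (w : seq letter) (s : nat) :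
  SL2nonneg A -> SL2nonneg B -> A *m B != B *m A ->
  well_oriented (toR A) (toR B) ->
  \tr A < \tr B -> \tr (A *m B) = \tr (B *m B) ->
  trw A B (w ++ [:: La; Lb] ++ pw s [:: La; Lb; Lb] ++ [:: La; Lb; Lb; Lb])
    < trw A B (w ++ [:: La; Lb; Lb] ++ pw s [:: La; Lb; Lb] ++ [:: La; Lb; Lb])
  /\
  ((w = [::] \/ exists w', w = La :: w') ->
   trw A B (w ++ [:: La; Lb; Lb; Lb] ++ pw s [:: La; Lb; Lb] ++ [:: La; Lb])
    < trw A B (w ++ [:: La; Lb; Lb] ++ pw s [:: La; Lb; Lb] ++ [:: La; Lb; Lb])).
Proof.
move=> HA HB _ _ Htr Htt.
have [f [g [Hg Hgf HV]]] := Vpow s HA HB.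
set V := phi A B (pw s [:: La; Lb; Lb]) in HV.
set P := A *m B *m B in HV.
have dA : \det A = 1 by case: HA.
have dB : \det B = 1 by case: HB.
have SW := SL_phi w HA HB.
have ha := tr_ge2 HA.
have ht : \tr (A *m B) = \tr B ^+ 2 - 2 by rewrite Htt CHtr dB mulr1.
set Bi := \tr B *: 1%:M - B.
have HBi : B *m Bi = 1%:M.
  have -> : B *m Bi = (\det B)%:M by rewrite /Bi det2 tr2; mxring.
  by rewrite dB.
have E1 : trw A B (w ++ [:: La; Lb] ++ pw s [:: La; Lb; Lb] ++ [:: La; Lb; Lb; Lb])
   = \tr (phi A B w *m A *m B *m (V *m P) *m B).
  by rewrite /trw !phi_cat !(phi_a, phi_b) phi_nil !mulmx1 !mulmxA.
have E2 : trw A B (w ++ [:: La; Lb; Lb] ++ pw s [:: La; Lb; Lb] ++ [:: La; Lb; Lb])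
   = \tr (phi A B w *m A *m B *m B *m (V *m P)).
  by rewrite /trw !phi_cat !(phi_a, phi_b) phi_nil !mulmx1 !mulmxA.
have E3 : trw A B (w ++ [:: La; Lb; Lb; Lb] ++ pw s [:: La; Lb; Lb] ++ [:: La; Lb])
   = \tr (phi A B w *m A *m B *m B *m B *m (V *m (A *m B))).
  by rewrite /trw !phi_cat !(phi_a, phi_b) phi_nil !mulmx1 !mulmxA.
have HV2 : V *m (A *m B) = f *: (A *m B) - g *: Bi.
  transitivity (V *m (A *m B) *m (B *m Bi)); first by rewrite HBi mulmx1.
  rewrite (_ : V *m (A *m B) *m (B *m Bi) = V *m P *m Bi); last by rewrite /P !mulmxA.
  rewrite HV.
  have -> : (f *: P - g%:M) *m Bi = (f * \det B) *: (A *m B) - g *: Bi.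
    rewrite /P /Bi det2 tr2; mxring.
  by rewrite dB mulr1.
rewrite E1 E2 E3 HV HV2.
have HWd : forall W, W = phi A B w -> True by [].
move: SW; move HW: (phi A B w) => W SW.
have T1 : \tr (W *m A *m B *m (f *: P - g%:M) *m B) = f * \tr (W *m (A *m B *m A *m B *m B *m B)) - g * \tr (W *m (A *m B *m B)).
  by rewrite /P; trring.
have T2 : \tr (W *m A *m B *m B *m (f *: P - g%:M)) = f * \tr (W *m (A *m B *m B *m A *m B *m B)) - g * \tr (W *m (A *m B *m B)).
  by rewrite /P; trring.
have T3 : \tr (W *m A *m B *m B *m B *m (f *: (A *m B) - g *: Bi)) = f * \tr (W *m (A *m B *m B *m B *m A *m B)) - g * (\det B * \tr (W *m (A *m B *m B))).
  by rewrite /Bi det2; trring.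
rewrite T1 T2 T3 dB mul1r.
have hf : 0 < f by lia.
have hb : 3 <= \tr B by lia.
have h0 : 0 <= (\tr B - \tr A - 1) * \tr B by apply: mulr_ge0; lia.
have hal : 1 <= \tr B * \tr B - 2 - \tr A * \tr B by nia.
have SAB : SL2nonneg (A *m B) by exact: SL_mul.
set X1 := A *m B *m A *m B *m B *m B.
set X2 := A *m B *m B *m A *m B *m B.
set X3 := A *m B *m B *m B *m A *m B.
have P1 : 0 < \tr (W *m X2) - \tr (W *m X1).
  rewrite (_ : _ - _ = \tr (W *m (X2 - X1))); last by rewrite mulmxBr raddfB.
  rewrite /X1 /X2 M1_id dA dB ht !expr1n !mulr1 !mul1r.
  apply: combo_pos => //; rewrite ?expr2; nia.
split.
  have := mulr_gt0 hf P1. nia.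
move=> [Hw | [w' Hw]].
- move: HW; rewrite Hw phi_nil => HW; subst W.
  have P2 : 0 < \tr (1%:M *m X2) - \tr (1%:M *m X3).
    rewrite (_ : _ - _ = \tr (1%:M *m (X2 - X3))); last by rewrite mulmxBr raddfB.
    rewrite mul1mx /X2 /X3 M2_id dA dB !raddfD /= !mxtraceZ mxtrace_scalar ht !expr1n !mulr1 !mul1r !mxtrace_scalar !mulr2n.
    have ht0 : 0 <= \tr B * \tr B - 2 by nia.
    have := mulr_ge0 ht0 (le_trans ler01 hal).
    rewrite ?expr2; move: ha Htr; move: (\tr A) (\tr B) => a0 b0; clear.
    move=> *; have hb2 : 9 <= b0 * b0 by nia.
    have ha2 : 4 <= a0 * a0 by nia.
    nia.
  have := mulr_gt0 hf P2. nia.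
- move: HW; rewrite Hw phi_a => HW; subst W.
  have SW' := SL_phi w' HA HB.
  have P2 : 0 < \tr (A *m phi A B w' *m X2) - \tr (A *m phi A B w' *m X3).
    rewrite (_ : _ - _ = \tr (phi A B w' *m ((X2 - X3) *m A))); last first.
      have cyc : forall X Y : 'M[int]_2, \tr (A *m phi A B w' *m X) - \tr (A *m phi A B w' *m Y)
          = \tr (phi A B w' *m ((X - Y) *m A)).
        move=> X Y; rewrite mulmxBl mulmxBr raddfB /= !mulmxA.
        have c1 : forall Z : 'M[int]_2, \tr (phi A B w' *m Z *m A) = \tr (A *m phi A B w' *m Z).
          by move=> Z; rewrite mxtrace_mulC mulmxA.
        by rewrite !c1.
      exact: cyc.
    rewrite /X2 /X3 M2A_id dA dB ht ?expr1n ?mulr1 ?mul1r.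
    apply: combo_pos => //; rewrite ?expr2.
    1-4: move: ha Htr; move: (\tr A) (\tr B) => a0 b0; clear => ha Htr.
    1-4: have [? ? ? ?] := ar ha Htr; nia.
  have := mulr_gt0 hf P2. nia.
Qed.
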